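(* For $n\ge 2$ and $d\ge0$, the set of twisted $1$-forms $\omega\in H^0(\mathbb P^n,\Omega^1_{\mathbb P^n}(d+2))$ which admit a polynomial integrating factor is Zariski closed.
   Context: $H^0(\mathbb P^n,\Omega^1_{\mathbb P^n}(d+2))$ is identified with homogeneous polynomial $1$-forms $\sum_ia_idx_i$ on $\mathbb C^{n+1}$ with $a_i$ of degree $d+1$ and $\sum_ix_ia_i=0$ (no assumption on the codimension of the zero set). A polynomial integrating factor for $\omega$ is a non-zero $P\in H^0(\mathbb P^n,\mathcal O_{\mathbb P^n}(d+2))$ (homogeneous polynomial of degree $d+2$) such that $d(\omega/P)=0$. *)

(* Defs.v *)
From HB Require Import structures.
From mathcomp Require Import all_boot all_order all_algebra.
From mathcomp Require Import reals.
From mathcomp Require Import complex.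
From mathcomp Require Import mpoly.

Set Implicit Arguments.
Unset Strict Implicit.
Unset Printing Implicit Defensive.

Import Order.TTheory GRing.Theory Num.Theory.
Local Open Scope ring_scope.

(* A polynomial 1-form  omega = sum_i a_i dx_i  on C^(n+1), given by its
   coefficients a : 'I_(n+1) -> C[x_0,...,x_n]. *)

(* omega is an element of H^0(P^n, Omega^1(d+2)): every a_i is homogeneous
   of degree d+1 and  sum_i x_i a_i = 0. *)
Definition twisted_form (K : nzRingType) (n d : nat)
    (a : 'I_n.+1 -> {mpoly K[n.+1]}) : Prop :=
  (forall i, a i \is (d.+1).-homog) /\ \sum_(i < n.+1) 'X_i * a i = 0.

Definition dform_coef (K : nzRingType) (n : nat)
    (a : 'I_n.+1 -> {mpoly K[n.+1]}) (i j : 'I_n.+1) : {mpoly K[n.+1]} :=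
  mderiv i (a j) - mderiv j (a i).

Definition dP_wedge_coef (K : nzRingType) (n : nat) (P : {mpoly K[n.+1]})
    (a : 'I_n.+1 -> {mpoly K[n.+1]}) (i j : 'I_n.+1) : {mpoly K[n.+1]} :=
  mderiv i P * a j - mderiv j P * a i.

(* d(omega / P) = (P d(omega) - dP /\ omega) / P^2 ; so d(omega/P) = 0 iff
   P d(omega) = dP /\ omega, coefficientwise. *)
Definition closed_over (K : nzRingType) (n : nat) (P : {mpoly K[n.+1]})
    (a : 'I_n.+1 -> {mpoly K[n.+1]}) : Prop :=
  forall i j : 'I_n.+1, P * dform_coef a i j = dP_wedge_coef P a i j.

Definition has_poly_integrating_factor (K : nzRingType) (n d : nat)
    (a : 'I_n.+1 -> {mpoly K[n.+1]}) : Prop :=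
  exists P : {mpoly K[n.+1]},
    [/\ P != 0, P \is (d.+2).-homog & closed_over P a].

(* Linear coordinates on the space of forms: the coefficient of the
   monomial m (of degree < d+2, i.e. including all monomials of degree d+1)
   in a_i, for (i, m) in the finite index type coord_index n d. *)
Definition coord_index (n d : nat) : finType :=
  ('I_n.+1 * 'X_{1..n.+1 < d.+2})%type.

Definition form_coords (K : nzRingType) (n d : nat)
    (a : 'I_n.+1 -> {mpoly K[n.+1]}) : 'I_#|coord_index n d| -> K :=
  fun k => let ij := enum_val k in (a ij.1)@_(bmnm ij.2).

Definition zariski_closed_forms (K : nzRingType) (n d : nat)
    (S : ('I_n.+1 -> {mpoly K[n.+1]}) -> Prop) : Prop :=
  exists (I : Type) (F : I -> {mpoly K[#|coord_index n d|]}),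
    forall a, @twisted_form K n d a ->
      (S a <-> forall k : I, (F k).@[@form_coords K n d a] = 0).

(* Main.v *)
Require Import Defs.
From HB Require Import structures.
From mathcomp Require Import all_boot all_order all_algebra.
From mathcomp Require Import reals complex mpoly.
From mathcomp Require Import ring.
Set Implicit Arguments. Unset Strict Implicit. Unset Printing Implicit Defensive.
Import Order.TTheory GRing.Theory Num.Theory.
Local Open Scope ring_scope.

Definition Eform (K : nzRingType) (n : nat) (P : {mpoly K[n.+1]})
  (a : 'I_n.+1 -> {mpoly K[n.+1]}) (i j : 'I_n.+1) : {mpoly K[n.+1]} :=
  P * dform_coef a i j - dP_wedge_coef P a i j.

Lemma closed_overE (K : nzRingType) n (P : {mpoly K[n.+1]}) a :
  closed_over P a <-> forall i j, Eform P a i j = 0.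
Proof.
split=> H i j; first by rewrite /Eform H subrr.
by apply/eqP; rewrite -subr_eq0; apply/eqP/H.
Qed.

Lemma msize_mderiv (K : nzRingType) n i (p : {mpoly K[n]}) :
  (msize (p^`M(i)) <= msize p)%N.
Proof.
rewrite [X in (X <= _)%N]msizeE; apply/bigmax_leqP_seq => m hm _.
move: hm; rewrite mcoeff_msupp mcoeff_mderiv => hm.
have hs : (m + U_(i))%MM \in msupp p.
  rewrite mcoeff_msupp; apply: contraNneq hm => ->; by rewrite mul0rn.
have := msize_mdeg_lt hs; rewrite mdegD mdeg1 addn1; exact: ltnW.
Qed.

Lemma msize_homog (K : nzRingType) n D (p : {mpoly K[n]}) :
  p \is D.-homog -> (msize p <= D.+1)%N.
Proof.
move=> hp; rewrite msizeE; apply/bigmax_leqP_seq => m hm _.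
by rewrite (dhomog_mf hp hm).
Qed.

Lemma map_mderiv (K S : nzRingType) (f : {rmorphism K -> S}) n i (p : {mpoly K[n]}) :
  map_mpoly f (p^`M(i)) = (map_mpoly f p)^`M(i).
Proof.
apply/mpolyP => m; rewrite mcoeff_map_mpoly !mcoeff_mderiv mcoeff_map_mpoly.
by rewrite raddfMn.
Qed.

Lemma map_Eform (K S : nzRingType) (f : {rmorphism K -> S}) n (P : {mpoly K[n.+1]}) a i j :
  map_mpoly f (Eform P a i j) =
  Eform (map_mpoly f P) (fun k => map_mpoly f (a k)) i j.
Proof.
rewrite /Eform /dform_coef /dP_wedge_coef.
by rewrite !(rmorphB, rmorphM) /= !map_mderiv.
Qed.

Lemma EformD (K : comNzRingType) n (P Q : {mpoly K[n.+1]}) a i j :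
  Eform (P + Q) a i j = Eform P a i j + Eform Q a i j.
Proof.
rewrite /Eform /dform_coef /dP_wedge_coef !mderivD.
ring.
Qed.

Lemma EformZ (K : comNzRingType) n c (P : {mpoly K[n.+1]}) a i j :
  Eform (c *: P) a i j = c *: Eform P a i j.
Proof.
rewrite /Eform /dform_coef /dP_wedge_coef !mderivZ.
by rewrite !scalerBr !scalerAl; reflexivity.
Qed.

Lemma Eform_sum (K : comNzRingType) n (I : finType) (c : I -> K) (Q : I -> {mpoly K[n.+1]}) a i j :
  Eform (\sum_k c k *: Q k) a i j = \sum_k c k *: Eform (Q k) a i j.
Proof.
elim/big_rec2: _ => [|k y x _ H].
  rewrite /Eform /dform_coef /dP_wedge_coef.
  by rewrite !linear0 !mul0r !subr0.
by rewrite EformD EformZ H.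
Qed.

Lemma msize_Eform (K : nzRingType) n d (P : {mpoly K[n.+1]}) a i j :
  (msize P <= d.+3)%N -> (forall k, msize (a k) <= d.+2)%N ->
  (msize (Eform P a i j) <= (d.+3 + d.+2).+1)%N.
Proof.
move=> hP ha; rewrite /Eform /dform_coef /dP_wedge_coef.
have hD : forall p q : {mpoly K[n.+1]}, (msize p <= (d.+3 + d.+2).+1)%N ->
    (msize q <= (d.+3 + d.+2).+1)%N -> (msize (p - q) <= (d.+3 + d.+2).+1)%N.
  move=> p q hp hq; apply: leq_trans (msizeD_le _ _) _.
  by rewrite geq_max hp msizeN.
have hM : forall p q : {mpoly K[n.+1]}, (msize p <= d.+3)%N ->
    (msize q <= d.+2)%N -> (msize (p * q) <= (d.+3 + d.+2).+1)%N.
  move=> p q hp hq; apply: leq_trans (msizeM_le _ _) _.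
  by rewrite ltnS leq_add.
have hd : forall k l, (msize (mderiv k (a l)) <= d.+2)%N.
  by move=> k l; exact: leq_trans (msize_mderiv _ _) (ha l).
have hdP : forall k, (msize (mderiv k P) <= d.+3)%N.
  by move=> k; exact: leq_trans (msize_mderiv _ _) hP.
apply: (hD); first apply: (hM) => //.
  apply: leq_trans (msizeD_le _ _) _; by rewrite geq_max hd msizeN hd.
by apply: (hD); apply: (hM).
Qed.

Definition Cp (n d : nat) : pred 'X_{1..n.+1 < d.+3} := fun m => mdeg m == d.+2.

Definition colm (n d : nat) (k : 'I_#|@Cp n d|) : 'X_{1..n.+1} := bmnm (enum_val k).
Definition Rw (n d : nat) : finType :=
  ('I_n.+1 * 'I_n.+1 * 'X_{1..n.+1 < (d.+3 + d.+2).+1})%type.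
Definition Agen (K : nzRingType) (n d : nat) (j : 'I_n.+1) :
    {mpoly {mpoly K[#|coord_index n d|]}[n.+1]} :=
  \sum_(k < #|coord_index n d|)
     (if (enum_val k).1 == j then 'X_k else 0) *: 'X_[bmnm (enum_val k).2].
Definition Gmx (K : comNzRingType) (n d : nat) :
    'M[{mpoly K[#|coord_index n d|]}]_(#|@Rw n d|, #|@Cp n d|) :=
  \matrix_(r, k) (Eform 'X_[colm k] (@Agen K n d)
                    (enum_val r).1.1 (enum_val r).1.2)@_(bmnm (enum_val r).2).
Definition Pof (K : nzRingType) (n d : nat) (v : 'rV[K]_#|@Cp n d|) : {mpoly K[n.+1]} :=
  \sum_k v 0 k *: 'X_[colm k].

Lemma mapA (K : comNzRingType) n d a j : twisted_form d a ->
  map_mpoly (meval (form_coords a)) (@Agen K n d j) = a j.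
Proof.
move=> [ha _].
rewrite /Agen raddf_sum /=.
pose G (x : coord_index n d) : {mpoly K[n.+1]} :=
  if x.1 == j then (a j)@_(bmnm x.2) *: 'X_[bmnm x.2] else 0.
rewrite (eq_bigr (fun k => G (enum_val k))); last first.
  move=> k _; rewrite map_mpolyZ map_mpolyX /G.
  case: eqP => [e|ne].
    by rewrite /= mevalXU /form_coords /= e.
  by rewrite /= meval0 scale0r.
rewrite -(big_enum_val G).
have -> : \sum_(x in xpredT) G x =
    \sum_(i < n.+1) \sum_(m : 'X_{1..n.+1 < d.+2}) G (i, m).
  by rewrite pair_big.
rewrite (bigD1 j) //= [X in _ + X]big1 ?addr0; last first.
  move=> i ni; apply: big1 => m _; by rewrite /G /= (negPf ni).
rewrite /G /= eqxx.
by rewrite {2}(mpolywE (msize_homog (ha j))).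
Qed.

Lemma Eform_ext (K : nzRingType) n (P : {mpoly K[n.+1]}) a b i j :
  (forall k, a k = b k) -> Eform P a i j = Eform P b i j.
Proof. by move=> H; rewrite /Eform /dform_coef /dP_wedge_coef !H. Qed.

Lemma Gentry (K : comNzRingType) n d a r k : twisted_form d a ->
  map_mx (meval (form_coords a)) (Gmx K n d) r k =
  (Eform 'X_[colm k] a (enum_val r).1.1 (enum_val r).1.2)@_(bmnm (enum_val r).2).
Proof.
move=> ha; rewrite mxE /Gmx mxE -mcoeff_map_mpoly map_Eform map_mpolyX.
by rewrite (Eform_ext _ _ _ (fun l => mapA l ha)).
Qed.

Lemma coefP (K : comNzRingType) n d a (v : 'rV[K]_#|@Cp n d|) r :
  twisted_form d a ->
  (map_mx (meval (form_coords a)) (Gmx K n d) *m v^T) r 0 =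
  (Eform (Pof v) a (enum_val r).1.1 (enum_val r).1.2)@_(bmnm (enum_val r).2).
Proof.
move=> ha; rewrite mxE /Pof Eform_sum raddf_sum /=; apply: eq_bigr => k _.
by rewrite Gentry // !mxE mcoeffZ mulrC.
Qed.

Lemma Pof_coef (K : nzRingType) n d (v : 'rV[K]_#|@Cp n d|) k :
  (Pof v)@_(colm k) = v 0 k.
Proof.
rewrite /Pof raddf_sum /= (bigD1 k) //= [X in _ + X]big1 ?addr0.
  by rewrite mcoeffZ mcoeffX eqxx mulr1.
move=> k' nk; rewrite mcoeffZ mcoeffX.
suff /negPf -> : colm k' != colm k by rewrite mulr0.
apply: contra nk => /eqP e; apply/eqP; apply: enum_val_inj; exact: val_inj.
Qed.

Lemma Pof_homog (K : nzRingType) n d (v : 'rV[K]_#|@Cp n d|) :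
  Pof v \is (d.+2).-homog.
Proof.
apply: rpred_sum => k _; apply: rpredZ; rewrite dhomogX.
by have := enum_valP k.
Qed.

Lemma Pof_eq (K : nzRingType) n d (P : {mpoly K[n.+1]}) :
  P \is (d.+2).-homog -> Pof (\row_k P@_(@colm n d k)) = P.
Proof.
move=> hP; rewrite [RHS](mpolywE (msize_homog hP)).
rewrite (bigID (fun m => @Cp n d m)) /= [X in _ = _ + X]big1 ?addr0; last first.
  by move=> m hm; rewrite (dhomog_nemf_coeff hP) ?scale0r.
rewrite (big_enum_val (A := @Cp n d)) /=.
by apply: eq_bigr => k _; rewrite mxE.
Qed.

Lemma factor_ker (K : comNzRingType) n d a : twisted_form d a ->
  has_poly_integrating_factor d a <->
  exists2 v : 'rV[K]_#|@Cp n d|, v != 0 &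
    map_mx (meval (form_coords a)) (Gmx K n d) *m v^T = 0.
Proof.
move=> ha; split.
  move=> [P [nz hP cl]]; exists (\row_k P@_(@colm n d k)).
    have hm := mlead_supp nz.
    have hdeg := dhomog_mf hP hm.
    have lt : (mdeg (mlead P) < d.+3)%N by rewrite hdeg.
    have hc : (BMultinom lt : 'X_{1..n.+1 < d.+3}) \in @Cp n d.
      by rewrite unfold_in /Cp /= hdeg.
    apply/eqP => /rowP /(_ (enum_rank_in hc (BMultinom lt))).
    rewrite !mxE /colm enum_rankK_in //= => /eqP.
    by rewrite mleadc_eq0 (negPf nz).
  apply/matrixP => r z; rewrite (ord1 z) coefP // Pof_eq //.
  by move/closed_overE: cl => ->; rewrite mcoeff0 mxE.
move=> [v nz hv]; exists (Pof v); split.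
- apply: contra nz => /eqP hP; apply/eqP/rowP => k.
  by rewrite mxE -Pof_coef hP mcoeff0.
- exact: Pof_homog.
apply/closed_overE => i j; apply/mpolyP => mu; rewrite mcoeff0.
case: (ltnP (mdeg mu) (d.+3 + d.+2).+1) => h.
  pose r : 'I_#|@Rw n d| := enum_rank ((i, j, BMultinom h) : Rw n d).
  have := congr1 (fun M : 'M[K]_(#|@Rw n d|, 1) => M r 0) hv; rewrite coefP // /r enum_rankK /= mxE.
  by [].
apply: memN_msupp_eq0; apply: msize_mdeg_ge; apply: leq_trans h.
apply: msize_Eform; first exact: msize_homog (Pof_homog v).
by move=> k; case: ha => hh _; exact: msize_homog (hh k).
Qed.

Lemma ker_minors (K : fieldType) m N (M : 'M[K]_(m,N)) :
  (exists2 v : 'rV[K]_N, v != 0 & M *m v^T = 0) <->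
  (forall f : 'I_N -> 'I_m, \det (rowsub f M) = 0).
Proof.
split.
  move=> [v nz Mv] f; apply/eqP; rewrite -det_tr; apply/det0P; exists v => //.
  apply: trmx_inj; rewrite trmx_mul trmxK trmx0 mul_rowsub_mx Mv.
  by apply/matrixP => i j; rewrite !mxE.
move=> H; case: (ltnP (\rank M) N) => hr.
  have hk : \rank (kermx M^T) != 0%N by rewrite mxrank_ker mxrank_tr subn_eq0 -ltnNge.
  have [i hi] : exists i, row i (kermx M^T) != 0.
    apply/existsP; move: hk; apply: contraR; rewrite negb_exists => /forallP hz.
    suff -> : kermx M^T = 0 by rewrite mxrank0.
    by apply/row_matrixP => i; rewrite row0; apply/eqP; rewrite -[_ == _]negbK hz.
  exists (row i (kermx M^T)) => //.
  apply: trmx_inj; rewrite trmx_mul trmxK trmx0 -row_mul mulmx_ker.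
  by rewrite row0.
have Er : \rank M = N by apply/eqP; rewrite eqn_leq rank_leq_col.
exfalso.
have := maxrowsub_free M; move: (maxrankfun M) => g.
move: g; move: (\rank M) Er => r Er g Hg; subst r.
move: Hg; rewrite row_free_unit unitmxE unitfE H.
by rewrite eqxx.
Qed.

Lemma main_gen (K : fieldType) n d :
  @zariski_closed_forms K n d (@has_poly_integrating_factor K n d).
Proof.
exists ('I_#|@Cp n d| -> 'I_#|@Rw n d|), (fun f => \det (rowsub f (Gmx K n d))).
move=> a ha.
apply: iff_trans (factor_ker ha) _.
apply: iff_trans (ker_minors _) _.
have E : forall f, \det (rowsub f (map_mx (meval (form_coords a)) (Gmx K n d))) =
    (\det (rowsub f (Gmx K n d))).@[form_coords a].
  move=> f; rewrite -det_map_mx; congr (\det _); apply/matrixP => x y; by rewrite !mxE.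
by split => H f; have := H f; rewrite E.
Qed.

Theorem lemma3p6 (R : realType) (n d : nat) :
  (2 <= n)%N ->
  @zariski_closed_forms R[i] n d (@has_poly_integrating_factor R[i] n d).
Proof. by move=> _; exact: main_gen. Qed.
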